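(* Let $T$ be an aperiodic $1$-bounded streaming $\omega$-string transducer with variable set $\mathcal X$. For all variables $X,Y\in\mathcal X$ there exists a first-order formula $\phi_{X\rightsquigarrow Y}(x,y)$ with two free variables such that for all strings $s\in\mathrm{dom}(T)$ and any two positions $i\le j$ of $s$, $s\models\phi_{X\rightsquigarrow Y}(i,j)$ iff $(q_i,X)\rightsquigarrow_1^{s[i+1:j]}(q_j,Y)$, where $q_0q_1\cdots$ is the accepting run of $T$ on $s$.
   Context: Streaming $\omega$-string transducer (SST): $T=(\Sigma,\Gamma,Q,q_0,\delta,\mathcal X,\rho,F)$ with $\delta:Q\times\Sigma\to Q$, finite variables $\mathcal X$, copyless updates $\rho:Q\times\Sigma\to[\mathcal X\to(\Gamma\cup\mathcal X)^*]$, partial output function $F:2^Q\rightharpoonup\mathcal X^*$. Run on $s=a_1a_2\cdots$: $q_0q_1\cdots$, $q_i=\delta(q_{i-1},a_i)$ ($q_i$ is the state after reading the first $i$ letters); it is accepting and $s\in\mathrm{dom}(T)$ iff the set of states visited infinitely often is in $\mathrm{dom}(F)$. $s[i+1:j]$ denotes the factor $a_{i+1}\cdots a_j$ (empty if $i=j$). For $u\in\Sigma^*$, states $p,q$ and variables $X,Y$: with $\sigma$ the composition of the updates along the run from $p$ on $u$ (starting from the identity substitution), $(p,X)\rightsquigarrow^u_k(q,Y)$ means that this run ends in $q$ and $X$ occurs exactly $k$ times in $\sigma(Y)$. Transition matrices: with $\mathrm{dom}(F)=\{F_1,\dots,F_n\}$, $M_u[(p,X)][(q,Y)]=\bot$ if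 the run from $p$ on $u$ does not end in $q$, else $(k,(x_1,\dots,x_n))$ where $(p,X)\rightsquigarrow^u_k(q,Y)$ and, with $S$ the set of visited states, $x_i=0$ if $S\not\subseteq F_i$, $1$ if $S=F_i$, $S$ if $S\subsetneq F_i$. $T$ is aperiodic if some $m\ge1$ gives $M_{u^m}=M_{u^{m+1}}$ for all $u$, and $1$-bounded if all non-$\bot$ entries $(k,\dots)$ satisfy $k\le1$. First-order formulas are over $\omega$-strings with positions $\{1,2,\dots\}$, natural order and unary letter predicates. *)

(* Defs.v *)
From mathcomp Require Import all_boot.
Set Implicit Arguments. Unset Strict Implicit. Unset Printing Implicit Defensive.

Record sst (Sig Gam : finType) := SST {
  state : finType;
  init : state;
  delta : state -> Sig -> state;
  var : finType;
  rho : state -> Sig -> var -> seq (Gam + var);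
  copyless : forall q a (X : var),
      \sum_(Y : var) count (pred1 (inr X)) (rho q a Y) <= 1;
  outF : {set state} -> option (seq var)
}.

Arguments init {Sig Gam} s.
Arguments delta {Sig Gam} s.
Arguments rho {Sig Gam} s.
Arguments outF {Sig Gam} s.

Section SST.
Variables (Sig Gam : finType) (T : sst Sig Gam).
Local Notation Q := (state T).
Local Notation X := (var T).

Definition dest (p : Q) (u : seq Sig) : Q := foldl (delta T) p u.

Definition visited (p : Q) (u : seq Sig) : {set Q} :=
  [set q in p :: scanl (delta T) p u].

Definition subst_apply (sigma : X -> seq (Gam + X)) (w : seq (Gam + X))
  : seq (Gam + X) :=
  flatten [seq match z with inl g => [:: inl g] | inr Z => sigma Z end | z <- w].

Fixpoint upd_comp (p : Q) (u : seq Sig) (sigma : X -> seq (Gam + X))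
  : X -> seq (Gam + X) :=
  match u with
  | [::] => sigma
  | a :: u' => upd_comp (delta T p a) u' (fun Y => subst_apply sigma (rho T p a Y))
  end.

Definition sigma_run (p : Q) (u : seq Sig) : X -> seq (Gam + X) :=
  upd_comp p u (fun Y => [:: inr Y]).

(* (p,X0) ~>^u_k (q,Y) *)
Definition flows (p : Q) (X0 : X) (u : seq Sig) (q : Q) (Y : X) (k : nat) : Prop :=
  dest p u = q /\ count (pred1 (inr X0)) (sigma_run p u Y) = k.

(* components x_i of transition-matrix entries: 0, 1, or the set S *)
Inductive xval := XZero | XOne | XSet of {set Q}.

Definition xcomp (S Fi : {set Q}) : xval :=
  if ~~ (S \subset Fi) then XZero else if S == Fi then XOne else XSet S.

(* Transition matrix M_u.  The tuple (x_1,...,x_n) indexed by dom(F) =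
   {F_1,...,F_n} is represented as a finite function on {set Q}, whose
   components outside dom(F) are fixed to XZero. *)
Definition trans_mx (u : seq Sig) (p : Q) (X0 : X) (q : Q) (Y : X)
  : option (nat * {ffun {set Q} -> xval}) :=
  if dest p u == q then
    Some (count (pred1 (inr X0)) (sigma_run p u Y),
          [ffun Fi => if outF T Fi is Some _ then xcomp (visited p u) Fi else XZero])
  else None.

Definition upow (u : seq Sig) (m : nat) : seq Sig := flatten (nseq m u).

Definition aperiodic : Prop :=
  exists m, 1 <= m /\
    forall u p X0 q Y, trans_mx (upow u m) p X0 q Y = trans_mx (upow u m.+1) p X0 q Y.

Definition one_bounded : Prop :=
  forall u p X0 q Y k v, trans_mx u p X0 q Y = Some (k, v) -> k <= 1.

(* omega-strings: s : nat -> Sig, with letter a_i = s (i-1) (positions i >= 1) *)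
Fixpoint run (s : nat -> Sig) (i : nat) : Q :=
  match i with 0 => init T | i'.+1 => delta T (run s i') (s i') end.

Definition in_dom (s : nat -> Sig) : Prop :=
  exists S : {set Q},
    (forall q, q \in S <-> forall n, exists m, n <= m /\ run s m = q) /\
    outF T S <> None.

(* factor s[i+1:j] = a_{i+1} ... a_j *)
Definition factor (s : nat -> Sig) (i j : nat) : seq Sig := [seq s k | k <- iota i (j - i)].

End SST.

Arguments dest {Sig Gam} T p u.
Arguments visited {Sig Gam} T p u.
Arguments sigma_run {Sig Gam} T p u.
Arguments flows {Sig Gam} T p X0 u q Y k.
Arguments trans_mx {Sig Gam} T u p X0 q Y.
Arguments aperiodic {Sig Gam} T.
Arguments one_bounded {Sig Gam} T.
Arguments run {Sig Gam} T s i.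
Arguments in_dom {Sig Gam} T s.
Arguments factor {Sig} s i j.

(* variables are natural numbers; positions are {1,2,...} *)
Inductive fo (Sig : Type) :=
| FLetter of Sig & nat
| FLt of nat & nat
| FEq of nat & nat
| FNot of fo Sig
| FAnd of fo Sig & fo Sig
| FEx of nat & fo Sig.

Fixpoint fo_sat (Sig : Type) (s : nat -> Sig) (nu : nat -> nat) (f : fo Sig) : Prop :=
  match f with
  | FLetter a x => s (nu x).-1 = a
  | FLt x y => nu x < nu y
  | FEq x y => nu x = nu y
  | FNot g => ~ fo_sat s nu g
  | FAnd g h => fo_sat s nu g /\ fo_sat s nu h
  | FEx x g => exists n, 1 <= n /\ fo_sat s (fun v => if v == x then n else nu v) g
  end.

Fixpoint fo_free_in (Sig : Type) (P : nat -> bool) (f : fo Sig) : bool :=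
  match f with
  | FLetter _ x => P x
  | FLt x y | FEq x y => P x && P y
  | FNot g => fo_free_in P g
  | FAnd g h => fo_free_in P g && fo_free_in P h
  | FEx x g => fo_free_in (fun v => (v == x) || P v) g
  end.

Definition val2 (i j : nat) : nat -> nat := fun v => if v == 0 then i else j.

(* Main.v *)
Require Import Defs.
From mathcomp Require Import all_boot.
From Stdlib Require Import Classical ClassicalEpsilon.
From mathcomp Require Import zify.
Set Implicit Arguments. Unset Strict Implicit. Unset Printing Implicit Defensive.

Inductive L (A : Type) : Type :=
| Lab of A & nat | Lt of nat & nat | Eqv of nat & nat
| Not of L A | And of L A & L A | Ex of nat & L A.
Arguments Lt {A}. Arguments Eqv {A}.

Definition upd (nu : nat -> nat) (x n : nat) : nat -> nat :=
  fun v => if v == x then n else nu v.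

Fixpoint sat (A : Type) (D : nat -> bool) (lab : nat -> A) (nu : nat -> nat) (f : L A) : Prop :=
  match f with
  | Lab a x => lab (nu x) = a
  | Lt x y => nu x < nu y
  | Eqv x y => nu x = nu y
  | Not g => ~ sat D lab nu g
  | And g h => sat D lab nu g /\ sat D lab nu h
  | Ex x g => exists n, D n /\ sat D lab (upd nu x n) g
  end.

Definition Tru {A} : L A := Eqv 0 0.
Definition Fls {A} : L A := Not Tru.
Definition Or {A} (a b : L A) : L A := Not (And (Not a) (Not b)).
Definition Le {A} x y : L A := Not (Lt y x).
Definition OrL {A} (l : seq (L A)) : L A := foldr Or Fls l.

Section Sem.
Variables (A : Type) (D : nat -> bool) (lab : nat -> A).
Lemma sat_Or nu a b : sat D lab nu (Or a b) <-> sat D lab nu a \/ sat D lab nu b.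
Proof. simpl; split; [|tauto]. intros H; apply NNPP; tauto. Qed.
Lemma sat_Tru nu : sat D lab nu Tru. Proof. by []. Qed.
Lemma sat_Fls nu : ~ sat D lab nu Fls. Proof. simpl; intro H; apply H; reflexivity. Qed.
Lemma sat_Le nu x y : sat D lab nu (Le x y) <-> nu x <= nu y.
Proof. simpl; split => H; [by rewrite leqNgt; apply/negP | by apply/negP; rewrite -leqNgt]. Qed.
Lemma sat_OrL (T : eqType) (s : seq T) (P : pred T) (f : T -> L A) nu :
  sat D lab nu (OrL [seq f t | t <- s & P t]) <-> exists t, t \in s /\ P t /\ sat D lab nu (f t).
Proof.
elim: s => [|t s IH].
  split; [by move=> H; exfalso; apply: H; reflexivity| by case=> ? []].
have -> : [seq t <- t :: s | P t] = (if P t then t :: [seq t <- s | P t] else [seq t <- s | P t]) by [].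
case Pt: (P t).
  rewrite map_cons.
  have -> : forall a l, OrL (a :: l) = Or a (OrL l) by [].
  rewrite sat_Or IH; split.
    case=> [H|[u [H1 H2]]]; first by exists t; rewrite inE eqxx.
    by exists u; rewrite inE H1 orbT.
  case=> u; rewrite inE => -[/orP[/eqP->|H1] [H2 H3]]; [by left|right; exists u; tauto].
rewrite IH; split; case=> u [H1 H2]; exists u; first by rewrite inE H1 orbT.
move: H1; rewrite inE => /orP[/eqP Eu|]; last by [].
by move: H2; rewrite Eu Pt => -[].
Qed.
Lemma sat_OrL_fin (T : finType) (P : pred T) (f : T -> L A) nu :
  sat D lab nu (OrL [seq f t | t <- enum T & P t]) <-> exists t, P t /\ sat D lab nu (f t).
Proof.
rewrite sat_OrL; split; case=> t H; exists t; [tauto|by rewrite mem_enum].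
Qed.
End Sem.

Fixpoint tr (A B : Type) (del : nat -> L A) (alp : B -> nat -> L A) (f : L B) : L A :=
  match f with
  | Lab b x => alp b x
  | Lt x y => Lt x y
  | Eqv x y => Eqv x y
  | Not g => Not (tr del alp g)
  | And g h => And (tr del alp g) (tr del alp h)
  | Ex x g => Ex x (And (del x) (tr del alp g))
  end.

Lemma tr_sat (A B : Type) (del : nat -> L A) (alp : B -> nat -> L A)
  (D : nat -> bool) (lab : nat -> A) (D' : nat -> bool) (lab' : nat -> B) :
  (forall n, D' n -> D n) ->
  (forall nu v, D (nu v) -> (sat D lab nu (del v) <-> D' (nu v))) ->
  (forall nu b x, sat D lab nu (alp b x) <-> lab' (nu x) = b) ->
  forall f nu, sat D lab nu (tr del alp f) <-> sat D' lab' nu f.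
Proof.
move=> sub Hd Ha; elim=> [b x|x y|x y|g IH|g IHg h IHh|x g IH] nu /=; try tauto.
- exact: Ha.
- by have := IH nu; tauto.
- by have := IHg nu; have := IHh nu; tauto.
- split; case=> n [Dn Hg]; exists n.
    case: Hg => Hn Hg.
    have := Hd (upd nu x n) x; rewrite /upd eqxx => H; split; first by apply/H.
    by apply/IH.
  have := Hd (upd nu x n) x; rewrite /upd eqxx => H.
  split; first by apply: sub.
  split; [apply/H; [apply: sub|]|apply/IH] => //.
Qed.

Section Prod.
Variables (M : Type) (mul : M -> M -> M) (one : M).
Hypotheses (mA : associative mul) (m1 : left_id one mul) (mr1 : right_id one mul).
Variables (D : nat -> bool) (lab : nat -> M).

Definition prodI (i j : nat) : M :=
  foldl (fun acc k => mul acc (lab k)) one [seq k <- iota i.+1 (j - i) | D k].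

Lemma foldl_acc (l : seq nat) a :
  foldl (fun acc k => mul acc (lab k)) a l = mul a (foldl (fun acc k => mul acc (lab k)) one l).
Proof.
elim: l a => [|k l IH] a /=; first by rewrite mr1.
by rewrite IH [in RHS]IH m1 mA.
Qed.

Lemma prodI_split i k j : i <= k -> k <= j -> prodI i j = mul (prodI i k) (prodI k j).
Proof.
move=> ik kj; rewrite /prodI.
have -> : j - i = (k - i) + (j - k) by lia.
rewrite iotaD filter_cat foldl_cat.
have -> : i.+1 + (k - i) = k.+1 by lia.
by rewrite foldl_acc.
Qed.

Lemma prodI_nil i j : j <= i -> prodI i j = one.
Proof. by move=> ji; rewrite /prodI (_ : j - i = 0) //; apply/eqP. Qed.

Lemma prodI_S i j : i <= j ->
  prodI i j.+1 = if D j.+1 then mul (prodI i j) (lab j.+1) else prodI i j.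
Proof.
move=> ij; rewrite (prodI_split ij (leqnSn j)) /prodI subSnn /=.
by case: (D j.+1) => /=; rewrite ?m1 ?mr1.
Qed.

End Prod.

Lemma eq_in_foldl' (M : Type) (f g : M -> nat -> M) (l : seq nat) a :
  (forall acc k, k \in l -> f acc k = g acc k) -> foldl f a l = foldl g a l.
Proof.
elim: l a => [|k l IH] a H //=; rewrite H ?inE ?eqxx // IH // => acc k' kl.
by apply: H; rewrite inE kl orbT.
Qed.

Lemma prodI_eq (M : Type) (mul : M -> M -> M) (one : M) (D : nat -> bool) (lab : nat -> M)
  (D' : nat -> bool) (lab' : nat -> M) i j :
  (forall k, i < k <= j -> D k = D' k /\ (D k -> lab k = lab' k)) ->
  prodI mul one D lab i j = prodI mul one D' lab' i j.
Proof.
move=> H; rewrite /prodI.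
have rng : forall k, k \in iota i.+1 (j - i) -> i < k <= j.
  by move=> k; rewrite mem_iota => /andP[a b]; apply/andP; split => //; lia.
have E : [seq k <- iota i.+1 (j - i) | D k] = [seq k <- iota i.+1 (j - i) | D' k].
  by apply: eq_in_filter => k /rng /H [].
rewrite -E; apply: eq_in_foldl' => acc k; rewrite mem_filter => /andP[Dk /rng /H [_ /(_ Dk) ->]] //.
Qed.

Definition mpow (M : Type) (mul : M -> M -> M) (one : M) (x : M) (n : nat) := iter n (mul x) one.

Definition claim (M : finType) (mul : M -> M -> M) (one : M) (C : {set M}) : Prop :=
  exists F : nat -> nat -> M -> L M, forall x y m (D : nat -> bool) (lab : nat -> M),
    (forall k, D k -> lab k \in C) -> forall nu,
    sat D lab nu (F x y m) <-> prodI mul one D lab (nu x) (nu y) = m.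

Definition mon_ok (M : finType) (mul : M -> M -> M) (one : M) : Prop :=
  [/\ associative mul, left_id one mul, right_id one mul &
      exists N, forall x, mpow mul one x N = mpow mul one x N.+1].

Lemma prodI_one (M : Type) (mul : M -> M -> M) (one : M) (D : nat -> bool) (lab : nat -> M) i j :
  associative mul -> right_id one mul -> left_id one mul -> (forall k, D k -> lab k = one) -> prodI mul one D lab i j = one.
Proof.
move=> mA r1 l1 H; elim: j => [|j IH]; first by rewrite prodI_nil.
case: (leqP j.+1 i) => [ji|ij]; first by rewrite prodI_nil.
rewrite (prodI_S mA l1 r1); last by rewrite -ltnS.
by case E: (D j.+1); rewrite ?IH // H // r1.
Qed.

Lemma claim_base (M : finType) (mul : M -> M -> M) (one : M) (C : {set M}) :
  associative mul -> right_id one mul -> left_id one mul -> (forall c, c \in C -> c = one) -> claim mul one C.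
Proof.
move=> mA r1 l1 H; exists (fun x y m => if m == one then Tru else Fls) => x y m D lab HD nu.
rewrite prodI_one //; last by move=> k /HD /H.
case: eqP => [->|ne] /=; first by split.
split; [by move=> H'; exfalso; apply: H'|by move=> E; exfalso; apply: ne].
Qed.

Section Mc.
Variables (M : finType) (mul : M -> M -> M) (one : M).
Hypotheses (mA : associative mul) (m1 : left_id one mul) (mr1 : right_id one mul).
Variable N : nat.
Hypothesis aper : forall x, mpow mul one x N = mpow mul one x N.+1.
Variable c : M.
Hypothesis c1n : c != one.

Definition Mcset : {set M} := [set x | [exists b, x == mul c b] && [exists a, x == mul a c]].
Definition Mc := {x : M | x \in Mcset}.
Lemma c_in : c \in Mcset.
Proof. by rewrite inE; apply/andP; split; apply/existsP; exists one; rewrite ?mr1 ?m1. Qed.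
Definition c1 : Mc := exist _ c c_in.
Definition ax x := odflt one [pick a | mul a c == x].
Lemma axP x : x \in Mcset -> mul (ax x) c = x.
Proof.
rewrite inE => /andP[_ /existsP[a /eqP ->]]; rewrite /ax; case: pickP => [a' /eqP //|/(_ a)].
by rewrite eqxx.
Qed.
Lemma Mc_c (y : Mc) : exists b, val y = mul c b.
Proof. by case: y => y /=; rewrite inE => /andP[/existsP[b /eqP ->] _]; exists b. Qed.
Lemma Mc_r (y : Mc) : exists a, val y = mul a c.
Proof. by case: y => y /=; rewrite inE => /andP[_ /existsP[b /eqP ->]]; exists b. Qed.

Lemma opc_in (x y : Mc) : mul (ax (val x)) (val y) \in Mcset.
Proof.
have [bx Ex] := Mc_c x; have [by' Ey] := Mc_c y; have [ay Ey'] := Mc_r y.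
rewrite inE; apply/andP; split; apply/existsP.
  exists (mul bx by'); rewrite Ey mA axP ?(valP x) // Ex mA //.
exists (mul (ax (val x)) ay); by rewrite Ey' mA.
Qed.

Definition opc (x y : Mc) : Mc := insubd c1 (mul (ax (val x)) (val y)).
Lemma val_opc0 x y : val (opc x y) = mul (ax (val x)) (val y).
Proof. by rewrite /opc val_insubd opc_in. Qed.
Lemma val_opc (x : Mc) (y : Mc) (b : M) : val y = mul c b -> val (opc x y) = mul (val x) b.
Proof. by move=> E; rewrite val_opc0 E mA axP // (valP x). Qed.

Lemma opcA : associative opc.
Proof.
move=> x y z; apply: val_inj.
have [bz Ez] := Mc_c z; have [by' Ey] := Mc_c y.
have Eyz : val (opc y z) = mul c (mul by' bz) by rewrite (val_opc (y) Ez) Ey mA.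
by rewrite (val_opc (x) Eyz) (val_opc (opc x y) Ez) (val_opc (x) Ey) mA.
Qed.
Lemma opc1 : left_id c1 opc.
Proof. move=> y; apply: val_inj; have [b E] := Mc_c y; by rewrite (val_opc (c1) E) E. Qed.
Lemma opcr1 : right_id c1 opc.
Proof. move=> x; apply: val_inj; by rewrite (@val_opc x c1 one) ?mr1. Qed.

Lemma mpowc x n : val (mpow opc c1 x n) = mul (mpow mul one (ax (val x)) n) c.
Proof.
elim: n => [|n IH] /=; first by rewrite m1.
by rewrite val_opc0 /= -/(mpow opc c1 x n) IH mA.
Qed.
Lemma aperc x : mpow opc c1 x N = mpow opc c1 x N.+1.
Proof. by apply: val_inj; rewrite !mpowc aper. Qed.

Lemma mpowSr x n : mpow mul one x n.+1 = mul (mpow mul one x n) x.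
Proof.
elim: n => [|n IH]; first by rewrite /= m1 mr1.
have -> : mpow mul one x n.+2 = mul x (mpow mul one x n.+1) by [].
by rewrite {1}IH mA.
Qed.

Lemma one_notin : one \notin Mcset.
Proof.
apply/negP; rewrite inE => /andP[/existsP[b /eqP E] _].
have P : forall n, mul (mpow mul one c n) (mpow mul one b n) = one.
  elim=> [|n IH]; first by rewrite /= m1.
  by rewrite mpowSr /= -/(mpow mul one b n) -mA (mA c) -E m1.
move/eqP: c1n; apply; rewrite -(P N) aper /= -/(mpow mul one c N) -mA P mr1 //.
Qed.

Lemma card_Mc : #|{: Mc}| < #|M|.
Proof.
rewrite card_sig -cardsT.
have -> : #|[pred x | x \in Mcset]| = #|Mcset| by apply: eq_card.
apply: proper_card; rewrite properT; apply/negP => /eqP E.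
by move: one_notin; rewrite E inE.
Qed.

Lemma mon_ok_c : mon_ok opc c1.
Proof. split; [exact: opcA|exact: opc1|exact: opcr1|by exists N; exact: aperc]. Qed.


Lemma nS (x : nat) : (x == x.+1) = false. Proof. by elim: x. Qed.
Lemma nSS (x : nat) : (x == x.+2) = false. Proof. by elim: x. Qed.
Lemma Sn (x : nat) : (x.+1 == x) = false. Proof. by elim: x. Qed.
Lemma SSn (x : nat) : (x.+2 == x) = false. Proof. by elim: x. Qed.

Variable C : {set M}.
Variable FB : nat -> nat -> M -> L M.
Hypothesis HB : forall x y m (D : nat -> bool) (lab : nat -> M),
  (forall k, D k -> lab k \in C :\ c) -> forall nu,
  sat D lab nu (FB x y m) <-> prodI mul one D lab (nu x) (nu y) = m.
Variable FC : nat -> nat -> Mc -> L Mc.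
Hypothesis HC : forall x y e (D : nat -> bool) (lab : nat -> Mc) nu,
  sat D lab nu (FC x y e) <-> prodI opc c1 D lab (nu x) (nu y) = e.

Definition isC v : L M := Lab c v.
Definition relB (f : L M) : L M := tr (fun v => Not (isC v)) (fun a x => Lab a x) f.
Definition alpha (b : Mc) (x : nat) : L M :=
  Or (Ex x.+1 (And (Lt x.+1 x) (And (isC x.+1) (And (Not (Ex x.+2 (And (Lt x.+1 x.+2) (And (Lt x.+2 x) (isC x.+2)))))
        (OrL [seq relB (FB x.+1 x m) | m <- enum M & mul c (mul m c) == val b])))))
     (And (Not (Ex x.+1 (And (Lt x.+1 x) (isC x.+1)))) (if b == c1 then Tru else Fls)).
Definition trC (f : L Mc) : L M := tr isC alpha f.

Section Str.
Variables (D : nat -> bool) (lab : nat -> M).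
Hypothesis HD : forall k, D k -> lab k \in C.
Definition DB k := D k && (lab k != c).
Definition Dc k := D k && (lab k == c).
Fixpoint prevc n := match n with 0 => None | n'.+1 => if Dc n' then Some n' else prevc n' end.
Definition prodS := prodI mul one D lab.
Definition prodB := prodI mul one DB lab.
Definition labc p : Mc := if prevc p is Some z then insubd c1 (mul c (mul (prodB z p) c)) else c1.
Definition prodC := prodI opc c1 Dc labc.

Lemma relB_sat nu f : sat D lab nu (relB f) <-> sat DB lab nu f.
Proof.
apply: tr_sat => //; first by move=> n /andP[].
move=> nu' v Dv; rewrite /DB Dv /=; split; first by move=> H; apply/eqP.
by move/eqP.
Qed.

Lemma FB_sat x y m nu : sat D lab nu (relB (FB x y m)) <-> prodB (nu x) (nu y) = m.
Proof.
rewrite relB_sat; apply: HB => k /andP[Dk ne]; by rewrite in_setD1 ne HD.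
Qed.

Lemma prevc_some p z : prevc p = Some z -> [/\ z < p, Dc z & forall w, z < w -> w < p -> ~~ Dc w].
Proof.
elim: p => [|p IH] //=; case E: (Dc p).
  case=> <-; split => // w a b; lia.
move/IH => [a b d]; split => //; first lia.
move=> w zw; rewrite ltnS leq_eqVlt => /orP[/eqP->|]; by [rewrite E|apply: d].
Qed.

Lemma prevc_someI p z : z < p -> Dc z -> (forall w, z < w -> w < p -> ~~ Dc w) -> prevc p = Some z.
Proof.
elim: p => [|p IH] //= zp Dz H.
case: (ltngtP z p) => [lt|gt|eq]; [|lia|by rewrite -eq Dz].
rewrite (negbTE (H p lt (ltnSn p))); apply: IH => // w a b; apply: H => //; lia.
Qed.

Lemma prevc_none p : prevc p = None -> forall z, z < p -> ~~ Dc z.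
Proof.
elim: p => [|p IH] //=; case E: (Dc p) => // /IH H z; rewrite ltnS leq_eqVlt => /orP[/eqP->|]; by [rewrite E|apply: H].
Qed.

Lemma val_labc p z : prevc p = Some z -> val (labc p) = mul c (mul (prodB z p) c).
Proof.
move=> E; rewrite /labc E val_insubd.
have -> : mul c (mul (prodB z p) c) \in Mcset => //.
rewrite inE; apply/andP; split; apply/existsP; [exists (mul (prodB z p) c)|exists (mul c (prodB z p))] => //.
by rewrite mA.
Qed.

Lemma alpha_sat nu b x : sat D lab nu (alpha b x) <-> labc (nu x) = b.
Proof.
rewrite /alpha sat_Or.
have E1 : sat D lab nu (Ex x.+1 (And (Lt x.+1 x) (And (isC x.+1) (And (Not (Ex x.+2 (And (Lt x.+1 x.+2) (And (Lt x.+2 x) (isC x.+2)))))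
        (OrL [seq relB (FB x.+1 x m) | m <- enum M & mul c (mul m c) == val b])))))
  <-> exists n, [/\ n < nu x, Dc n, (forall w, n < w -> w < nu x -> ~~ Dc w) & mul c (mul (prodB n (nu x)) c) = val b].
  simpl; split.
    case=> n [Dn [ltn [Cn [NW HO]]]].
    move: ltn Cn; rewrite /upd ?eqxx ?nS ?nSS ?Sn ?SSn => ltn Cn.
    move: HO; rewrite sat_OrL_fin => -[m [/eqP Em Hm]].
    move: Hm; rewrite FB_sat /upd ?eqxx ?nS ?nSS ?Sn ?SSn => Hm.
    exists n; split => //; first by rewrite /Dc Dn Cn eqxx.
      move=> w a b'; apply/negP => /andP[Dw /eqP Cw]; apply: NW; exists w; split => //.
      by rewrite /upd ?eqxx ?nS ?nSS ?Sn ?SSn /=.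
    by rewrite Hm.
  case=> n [ltn Dn NW E]; move: Dn => /andP[Dn /eqP Cn]; exists n; split => //.
  rewrite /upd ?eqxx ?nS ?nSS ?Sn ?SSn; split => //; split => //; split.
    case=> w [Dw]; rewrite /upd ?eqxx ?nS ?nSS ?Sn ?SSn /= => -[a [b' Cw]].
    by move: (NW w a b'); rewrite /Dc Dw Cw eqxx.
  rewrite sat_OrL_fin; exists (prodB n (nu x)); split; first by rewrite E.
  by rewrite FB_sat /upd ?eqxx ?nS ?nSS ?Sn ?SSn.
have E2 : sat D lab nu (And (Not (Ex x.+1 (And (Lt x.+1 x) (isC x.+1)))) (if b == c1 then Tru else Fls))
  <-> (forall n, n < nu x -> ~~ Dc n) /\ b = c1.
  simpl; split.
    case=> NE Hb; split.
      move=> n ltn; apply/negP => /andP[Dn /eqP Cn]; apply: NE; exists n; split => //.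
      by rewrite /upd ?eqxx ?nS ?nSS ?Sn ?SSn.
    by move: Hb; case: eqP => // _ H; exfalso; apply: H.
  case=> H ->; rewrite eqxx; split => //.
  case=> n [Dn]; rewrite /upd ?eqxx ?nS ?nSS ?Sn ?SSn => -[ltn Cn].
  by move: (H n ltn); rewrite /Dc Dn Cn eqxx.
rewrite E1 E2.
case E: (prevc (nu x)) => [z|].
  have [zl Dz Hz] := prevc_some E.
  split.
    case=> [[n [nl Dn Hn Eb]]|[H _]]; last by move: (H z zl); rewrite Dz.
    have En : prevc (nu x) = Some n by apply: prevc_someI.
    by apply: val_inj; rewrite (val_labc En) Eb.
  move=> Eb; left; exists z; split => //; by rewrite -Eb (val_labc E).
have H := prevc_none E.
split.
  case=> [[n [nl Dn _ _]]|[_ ->]]; last by rewrite /labc E.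
  by move: (H n nl); rewrite Dn.
move=> Eb; right; split => //; by rewrite -Eb /labc E.
Qed.


Lemma trC_sat nu f : sat D lab nu (trC f) <-> sat Dc labc nu f.
Proof.
apply: tr_sat; first by move=> n /andP[].
  move=> nu' v Dv; rewrite /Dc Dv /=; split; first by move=> ->; rewrite eqxx.
  by move/eqP.
by move=> nu' b x; apply: alpha_sat.
Qed.

Lemma FC_sat p q e nu : sat D lab nu (trC (FC p q e)) <-> prodC (nu p) (nu q) = e.
Proof. by rewrite trC_sat HC. Qed.

Lemma inv p : Dc p -> forall j, p <= j -> exists z, [/\ prevc j.+1 = Some z, p <= z &
  mul c (prodS p j) = mul (val (prodC p j)) (prodB z j)].
Proof.
move=> Dp; elim=> [|j IH] pj.
  have p0 : p = 0 by lia.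
  by exists p; rewrite /= -p0 Dp /prodS /prodC /prodB !prodI_nil.
case: (ltngtP p j.+1) => [lt|gt|eq]; last first.
- by exists p; rewrite /= -eq Dp /prodS /prodC /prodB !prodI_nil.
- lia.
have pj' : p <= j by lia.
have [z [Ez pz Inv]] := IH pj'.
have zj : z <= j by have [] := prevc_some Ez; lia.
rewrite /prodS /prodC (prodI_S mA m1 mr1) // (prodI_S opcA opc1 opcr1) //.
rewrite -/prodS -/prodC.
have PS : prevc j.+2 = if Dc j.+1 then Some j.+1 else prevc j.+1 by [].
case ED: (D j.+1); last first.
  exists z; rewrite PS Ez /Dc ED /=; split => //.
  by rewrite /prodB (prodI_S mA m1 mr1) // /DB ED.
case EC: (lab j.+1 == c).
  exists j.+1; rewrite PS /Dc ED EC /=; split => //.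
  rewrite /prodB prodI_nil // mr1.
  have V := val_labc Ez.
  have Eb : prodB z j.+1 = prodB z j by rewrite /prodB (prodI_S mA m1 mr1) // /DB ED EC.
  rewrite Eb in V.
  rewrite (val_opc (prodC p j) (b := mul (prodB z j) c) V).
  by rewrite (eqP EC) mA Inv -mA.
exists z; rewrite PS Ez /Dc ED EC /=; split => //.
rewrite /prodB (prodI_S mA m1 mr1) // /DB ED EC /= -/(prodB z j).
by rewrite mA Inv mA.
Qed.

Lemma inv_c p q : Dc p -> Dc q -> p <= q -> mul c (prodS p q) = val (prodC p q).
Proof.
move=> Dp Dq pq; have [z [Ez _ I]] := inv Dp pq.
move: Ez => /=; rewrite Dq => -[Eq].
by rewrite I -Eq /prodB prodI_nil // mr1.
Qed.

Lemma noC_eq i j : (forall k, i < k <= j -> ~~ Dc k) -> prodS i j = prodB i j.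
Proof.
move=> H; apply: prodI_eq => k /H; rewrite /Dc /DB; case: (D k) => //= ne; split => //.
Qed.

Lemma decomp i j p q : i < p -> p <= q -> q <= j -> Dc p -> Dc q ->
  (forall w, i < w -> w < p -> ~~ Dc w) -> (forall w, q < w -> w <= j -> ~~ Dc w) ->
  prodS i j = mul (mul (prodB i p) (val (prodC p q))) (prodB q j).
Proof.
move=> ip pq qj Dp Dq H1 H2.
rewrite /prodS (prodI_split mA m1 mr1 D lab (k := p)); try lia.
rewrite (prodI_split mA m1 mr1 D lab (i := p) (k := q) (j := j)) //.
rewrite -/prodS -(inv_c Dp Dq pq).
rewrite (noC_eq (i := q)); last by move=> k /andP[a b]; apply: H2.
case: p ip pq Dp H1 => [|p] ip pq Dp H1; first lia.
rewrite /prodS (prodI_S mA m1 mr1) ?Dp; last lia.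
move: Dp => /andP[Dp /eqP Cp]; rewrite Dp Cp.
rewrite -/prodS (noC_eq (i := i)); last by move=> k /andP[a b]; apply: H1.
rewrite /prodB (prodI_S mA m1 mr1) /DB ?Dp ?Cp ?eqxx /=; last lia.
by rewrite -/(prodB _ _) !mA.
Qed.

Definition noCf a b W : L M := Not (Ex W (And (Lt a W) (And (Le W b) (isC W)))).
Definition noCf' a b W : L M := Not (Ex W (And (Lt a W) (And (Lt W b) (isC W)))).

Lemma sat_And nu (f g : L M) : sat D lab nu (And f g) <-> sat D lab nu f /\ sat D lab nu g.
Proof. by []. Qed.
Lemma sat_Ex nu v (f : L M) : sat D lab nu (Ex v f) <-> exists n, D n /\ sat D lab (upd nu v n) f.
Proof. by []. Qed.

Lemma noCf_sat nu a b W : (a == W) = false -> (b == W) = false ->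
  sat D lab nu (noCf a b W) <-> forall w, nu a < w -> w <= nu b -> ~~ Dc w.
Proof.
move=> Wa Wb; rewrite /noCf /= /upd eqxx Wa Wb; split.
  move=> H w aw wb; apply/negP => /andP[Dw /eqP Cw]; apply: H; exists w; split => //.
  split => //; split => //; lia.
move=> H [n [Dn [a1 [b1 C1]]]]; have : n <= nu b by lia.
by move/(H n a1); rewrite /Dc Dn C1 eqxx.
Qed.

Lemma noCf'_sat nu a b W : (a == W) = false -> (b == W) = false ->
  sat D lab nu (noCf' a b W) <-> forall w, nu a < w -> w < nu b -> ~~ Dc w.
Proof.
move=> Wa Wb; rewrite /noCf' /= /upd eqxx Wa Wb; split.
  move=> H w aw wb; apply/negP => /andP[Dw /eqP Cw]; apply: H; exists w; split => //.
move=> H [n [Dn [a1 [b1 C1]]]].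
by move: (H n a1 b1); rewrite /Dc Dn C1 eqxx.
Qed.

Definition Fm x y m P Q W : L M :=
 Or (And (noCf x y W) (relB (FB x y m)))
    (Ex P (Ex Q (And (And (Lt x P) (And (Le P y) (And (isC P) (noCf' x P W))))
       (And (And (Lt x Q) (And (Le Q y) (And (isC Q) (noCf Q y W))))
          (OrL [seq And (relB (FB x P t.1.1)) (And (trC (FC P Q t.1.2)) (relB (FB Q y t.2)))
               | t <- enum {: M * Mc * M} & mul (mul t.1.1 (val t.1.2)) t.2 == m]))))).

Lemma Fm_sat x y m P Q W nu :
  (x == P) = false -> (y == P) = false -> (x == Q) = false -> (y == Q) = false ->
  (P == Q) = false -> (x == W) = false -> (y == W) = false -> (P == W) = false ->
  (Q == W) = false ->
  sat D lab nu (Fm x y m P Q W) <-> prodS (nu x) (nu y) = m.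
Proof.
move=> xP yP xQ yQ PQ xW yW PW QW.
have QP : (Q == P) = false by rewrite eq_sym.
rewrite /Fm sat_Or sat_And (noCf_sat _ xW yW) FB_sat.
set i := nu x; set j := nu y.
have E2 : sat D lab nu (Ex P (Ex Q (And (And (Lt x P) (And (Le P y) (And (isC P) (noCf' x P W))))
       (And (And (Lt x Q) (And (Le Q y) (And (isC Q) (noCf Q y W))))
          (OrL [seq And (relB (FB x P t.1.1)) (And (trC (FC P Q t.1.2)) (relB (FB Q y t.2)))
               | t <- enum {: M * Mc * M} & mul (mul t.1.1 (val t.1.2)) t.2 == m])))))
  <-> exists n1 n2, [/\ i < n1 <= j, Dc n1, (forall w, i < w -> w < n1 -> ~~ Dc w) &
        i < n2 <= j] /\ [/\ Dc n2, (forall w, n2 < w -> w <= j -> ~~ Dc w) &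
        exists t : M * Mc * M, [/\ mul (mul t.1.1 (val t.1.2)) t.2 = m, prodB i n1 = t.1.1,
            prodC n1 n2 = t.1.2 & prodB n2 j = t.2]].
  split.
    rewrite sat_Ex => -[n1 [D1]]; rewrite sat_Ex => -[n2 [D2]].
    rewrite !sat_And => -[[L1 [L2 [C1 N1]]] [[L3 [L4 [C2 N2]]] O]].
    move: N1; rewrite noCf'_sat //.
    move: N2; rewrite noCf_sat //.
    move: O; rewrite sat_OrL_fin => -[t [/eqP Et H]].
    move: H; rewrite !sat_And !FB_sat FC_sat => -[B1 [B2 B3]].
    move: L1 L2 C1 L3 L4 C2 B1 B2 B3 => /=; rewrite /upd /= ?xP ?xQ ?yP ?yQ ?PQ ?QP ?eqxx.
    move=> L1 L2 C1 L3 L4 C2 B1 B2 B3 N2 N1.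
    exists n1, n2; split; split => //.
    - by rewrite L1 /=; rewrite leqNgt; apply/negP.
    - by rewrite /Dc D1 C1 eqxx.
    - by rewrite L3 /=; rewrite leqNgt; apply/negP.
    - by rewrite /Dc D2 C2 eqxx.
    by exists t.
  case=> n1 [n2 [[/andP[L1 L2] /andP[D1 /eqP C1] N1 /andP[L3 L4]] [/andP[D2 /eqP C2] N2 [t [Et B1 B2 B3]]]]].
  rewrite sat_Ex; exists n1; split => //; rewrite sat_Ex; exists n2; split => //.
  rewrite !sat_And; split; [split; [|split; [|split]] | split; [split; [|split; [|split]]|]].
  - by rewrite /= /upd /= ?xP ?xQ ?yP ?yQ ?PQ ?QP ?eqxx.
  - by rewrite /= /upd /= ?xP ?xQ ?yP ?yQ ?PQ ?QP ?eqxx; apply/negP; rewrite -leqNgt.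
  - by rewrite /= /upd /= ?xP ?xQ ?yP ?yQ ?PQ ?QP ?eqxx.
  - rewrite noCf'_sat //.
    by rewrite /upd /= ?xP ?xQ ?yP ?yQ ?PQ ?QP ?eqxx.
  - by rewrite /= /upd /= ?xP ?xQ ?yP ?yQ ?PQ ?QP ?eqxx.
  - by rewrite /= /upd /= ?xP ?xQ ?yP ?yQ ?PQ ?QP ?eqxx; apply/negP; rewrite -leqNgt.
  - by rewrite /= /upd /= ?xP ?xQ ?yP ?yQ ?PQ ?QP ?eqxx.
  - rewrite noCf_sat //.
    by rewrite /upd /= ?xP ?xQ ?yP ?yQ ?PQ ?QP ?eqxx.
  rewrite sat_OrL_fin; exists t; split; first by rewrite Et.
  rewrite !sat_And !FB_sat FC_sat.
  by rewrite /upd /= ?xP ?xQ ?yP ?yQ ?PQ ?QP ?eqxx.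
rewrite E2.
case: (classic (exists k, i < k <= j /\ Dc k)) => [[k [Hk Dk]]|NC].
  split.
    case=> [[H _]|]; first by move: Hk => /andP[a b]; move: (H k a b); rewrite Dk.
    case=> n1 [n2 [[/andP[L1 L2] D1 N1 /andP[L3 L4]] [D2 N2 [t [Et B1 B2 B3]]]]].
    have n12 : n1 <= n2.
      rewrite leqNgt; apply/negP => lt; by move: (N2 n1 lt L2); rewrite D1.
    by rewrite (decomp L1 n12 L4 D1 D2 N1 N2) B1 B2 B3.
  move=> Em; right.
  pose P1 := fun n => [&& i < n, n <= j & Dc n].
  have exP : exists n, P1 n by exists k; rewrite /P1 Dk andbT.
  have ubP : forall n, P1 n -> n <= j by move=> n /and3P[].
  case: (ex_minnP exP) => n1 /and3P[L1 L2 D1] min1.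
  case: (ex_maxnP exP ubP) => n2 /and3P[L3 L4 D2] max2.
  have N1 : forall w, i < w -> w < n1 -> ~~ Dc w.
    move=> w a b; apply/negP => Dw; have : n1 <= w by apply: min1; rewrite /P1 a Dw /=; lia.
    lia.
  have N2 : forall w, n2 < w -> w <= j -> ~~ Dc w.
    move=> w a b; apply/negP => Dw; have : w <= n2 by apply: max2; rewrite /P1 Dw b andbT; lia.
    lia.
  have n12 : n1 <= n2 by apply: min1; rewrite /P1 L3 L4 D2.
  exists n1, n2; split; split => //; try by apply/andP.
  exists (prodB i n1, prodC n1 n2, prodB n2 j); split => //.
  by rewrite -(decomp L1 n12 L4 D1 D2 N1 N2).
have H : forall w, i < w -> w <= j -> ~~ Dc w.
  move=> w a b; apply/negP => Dw; apply: NC; exists w; split => //; by apply/andP.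
rewrite (noC_eq (i := i) (j := j)); last by move=> k /andP[]; apply: H.
split.
  case=> [[_ ->]|] //.
  case=> n1 [n2 [[/andP[L1 L2] D1 _ _] _]]; by move: (H n1 L1 L2); rewrite D1.
by move=> E; left.
Qed.

End Str.

Lemma step_claim : claim mul one C.
Proof.
exists (fun x y m => Fm x y m (x+y+1) (x+y+2) (x+y+3)) => x y m D lab HD nu.
by apply: (Fm_sat HD); apply/eqP; lia.
Qed.

End Mc.

Lemma all_claim n : forall (M : finType) (mul : M -> M -> M) (one : M),
  #|M| <= n -> mon_ok mul one -> forall C, claim mul one C.
Proof.
elim: n => [|n IHn] M mul one cM [mA m1 mr1 [N aper]] C.
  apply: claim_base => // x; have : #|M| = 0 by lia.
  by move/card0_eq => /(_ x); rewrite inE.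
have [k] := ubnP #|C|; elim: k C => [|k IHk] C Ck; first lia.
case: (pickP [pred c in C | c != one]) => [c /andP[Hc c1n]|none]; last first.
  apply: claim_base => // x xC; move: (none x) => /=; rewrite xC /=.
  by move/negbFE/eqP.
have [FB HB] : claim mul one (C :\ c).
  by apply: IHk; rewrite (cardsD1 c C) Hc in Ck; lia.
have [FC HC] : claim (opc m1 mr1 (c:=c)) (c1 m1 mr1 c) setT.
  apply: IHn; last by apply: (mon_ok_c mA m1 mr1 aper c).
  by rewrite -ltnS; apply: leq_trans (card_Mc mA m1 mr1 aper c1n) cM.
apply: (step_claim mA c1n HB (FC := FC)).
by move=> x y e D lab nu; apply: HC.
Qed.

Definition pb (P : Prop) : bool := if excluded_middle_informative P then true else false.
Lemma pbP (P : Prop) : pb P <-> P.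
Proof. by rewrite /pb; case: excluded_middle_informative. Qed.

Section SSTalg.
Variables (Sig Gam : finType) (T : sst Sig Gam).
Local Notation Q := (state T).
Local Notation Xv := (var T).

Lemma subst_cons (s : Xv -> seq (Gam + Xv)) z w :
  subst_apply s (z :: w) = (match z with inl g => [:: inl g] | inr Z => s Z end) ++ subst_apply s w.
Proof. by []. Qed.

Lemma subst_id (w : seq (Gam + Xv)) : subst_apply (fun Y => [:: inr Y]) w = w.
Proof. by elim: w => [|[g|Z] w IH] //; rewrite subst_cons IH. Qed.

Lemma subst_cat (s : Xv -> seq (Gam + Xv)) w1 w2 :
  subst_apply s (w1 ++ w2) = subst_apply s w1 ++ subst_apply s w2.
Proof. by rewrite /subst_apply map_cat flatten_cat. Qed.

Lemma subst_comp (s t : Xv -> seq (Gam + Xv)) w :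
  subst_apply s (subst_apply t w) = subst_apply (fun Z => subst_apply s (t Z)) w.
Proof.
elim: w => [|[g|Z] w IH] //.
  by rewrite !subst_cons IH.
by rewrite !subst_cons subst_cat IH.
Qed.

Lemma subst_ext (s t : Xv -> seq (Gam + Xv)) w :
  (forall Z, s Z = t Z) -> subst_apply s w = subst_apply t w.
Proof. by move=> H; elim: w => [|[g|Z] w IH] //; rewrite !subst_cons IH ?H. Qed.

Lemma upd_comp_gen p u (s : Xv -> seq (Gam + Xv)) Y :
  upd_comp p u s Y = subst_apply s (sigma_run T p u Y).
Proof.
elim: u p s Y => [|a u IH] p s Y; first by rewrite /sigma_run /= subst_cons cats0.
rewrite /sigma_run /= !IH subst_comp; apply: subst_ext => Z.
by rewrite subst_id.
Qed.

Lemma sigma_run_cons p a u Y :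
  sigma_run T p (a :: u) Y = subst_apply (rho T p a) (sigma_run T (delta T p a) u Y).
Proof.
rewrite /sigma_run /= upd_comp_gen; apply: subst_ext => Z; by rewrite subst_id.
Qed.

Lemma sigma_run_cat p u v Y :
  sigma_run T p (u ++ v) Y = subst_apply (sigma_run T p u) (sigma_run T (dest T p u) v Y).
Proof.
elim: u p Y => [|a u IH] p Y /=.
  rewrite [sigma_run T p [::]]/sigma_run /=.
  by rewrite -[LHS]subst_id.
rewrite sigma_run_cons IH subst_comp; apply: subst_ext => Z.
by rewrite sigma_run_cons.
Qed.

Lemma dest_cat p u v : dest T p (u ++ v) = dest T (dest T p u) v.
Proof. by rewrite /dest foldl_cat. Qed.

Lemma mem_subst (s : Xv -> seq (Gam + Xv)) w X :
  (inr X \in subst_apply s w) = [exists Z, (inr Z \in w) && (inr X \in s Z)].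
Proof.
elim: w => [|z w IH].
  by apply/idP/existsP => [//|[Z]].
rewrite subst_cons mem_cat IH; case: z => [g|Z0] /=.
  by apply/existsP/existsP => -[Z /andP[a b]]; exists Z; move: a; rewrite ?inE /= => a; rewrite a b.
apply/orP/existsP.
  case=> [H|/existsP[Z /andP[a b]]]; first by exists Z0; rewrite inE eqxx H.
  by exists Z; rewrite inE a orbT.
case=> Z /andP[]; rewrite inE => /orP[/eqP [->]|a] b; [by left|right; apply/existsP; exists Z; by rewrite a b].
Qed.
End SSTalg.

Section SSTmon.
Variables (Sig Gam : finType) (T : sst Sig Gam).
Local Notation Q := (state T).
Local Notation Xv := (var T).

Definition Mfull := ({ffun Q -> Q} * {ffun Q * Xv * Xv -> bool})%type.
Definition mulF (a b : Mfull) : Mfull :=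
  ([ffun p => b.1 (a.1 p)],
   [ffun t : Q * Xv * Xv => [exists Z, a.2 (t.1.1, t.1.2, Z) && b.2 (a.1 t.1.1, Z, t.2)]]).
Definition oneF : Mfull := ([ffun p => p], [ffun t : Q * Xv * Xv => t.1.2 == t.2]).
Definition hw (u : seq Sig) : Mfull :=
  ([ffun p => dest T p u], [ffun t : Q * Xv * Xv => inr t.1.2 \in sigma_run T t.1.1 u t.2]).

Lemma hw_nil : hw [::] = oneF.
Proof.
congr pair; apply/ffunP => t; rewrite !ffunE //.
case: t => [[p X] Y] /=; by rewrite /sigma_run /= inE.
Qed.

Lemma hw_cat u v : hw (u ++ v) = mulF (hw u) (hw v).
Proof.
congr pair; apply/ffunP => t; rewrite !ffunE /=; first by rewrite dest_cat.
case: t => [[p X] Y] /=.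
rewrite sigma_run_cat mem_subst.
apply/existsP/existsP => -[Z /andP[a b]]; exists Z; move: a b; rewrite ?ffunE /= => a b; by apply/andP; split.
Qed.

Lemma mulFA : associative mulF.
Proof.
move=> a b c; congr pair; apply/ffunP => t; rewrite !ffunE //=.
apply/existsP/existsP.
  case=> Z /andP[]; rewrite !ffunE /= => H1 /existsP[W /andP[H2 H3]].
  exists W; rewrite !ffunE /= H3 andbT; apply/existsP; exists Z; by rewrite H1 H2.
case=> W /andP[]; rewrite !ffunE /= => /existsP[Z /andP[H1 H2]] H3.
exists Z; rewrite H1 /= !ffunE /=; apply/existsP; exists W; by rewrite H2 H3.
Qed.

Lemma mulF1 : left_id oneF mulF.
Proof.
move=> a; case: a => [f g]; congr pair; apply/ffunP => t; rewrite !ffunE //=.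
case: t => [[p X] Y] /=.
apply/existsP/idP; first by case=> Z; rewrite !ffunE /= => /andP[/eqP -> H].
by move=> H; exists X; rewrite !ffunE /= eqxx.
Qed.

Lemma mulFr1 : right_id oneF mulF.
Proof.
move=> a; case: a => [f g]; congr pair; apply/ffunP => t; rewrite !ffunE //=.
case: t => [[p X] Y] /=.
apply/existsP/idP; first by case=> Z; rewrite !ffunE /= => /andP[H /eqP <-].
by move=> H; exists Y; rewrite !ffunE /= H eqxx.
Qed.

Definition Img : {set Mfull} := [set x | pb (exists u, hw u = x)].
Lemma ImgP x : reflect (exists u, hw u = x) (x \in Img).
Proof. rewrite inE; apply: (iffP idP) => H; by apply/pbP. Qed.
Lemma oneF_in : oneF \in Img. Proof. by apply/ImgP; exists [::]; rewrite hw_nil. Qed.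
Lemma hw_in u : hw u \in Img. Proof. by apply/ImgP; exists u. Qed.
Lemma mulF_in x y : x \in Img -> y \in Img -> mulF x y \in Img.
Proof. by move=> /ImgP[u <-] /ImgP[v <-]; rewrite -hw_cat hw_in. Qed.

Definition Mi : finType := {x : Mfull | x \in Img}.
Definition valI (x : Mi) : Mfull := val x.
Definition oneI : Mi := exist _ oneF oneF_in.
Definition mulI (x y : Mi) : Mi := insubd oneI (mulF (val x) (val y)).
Lemma val_mulI x y : val (mulI x y) = mulF (val x) (val y).
Proof. by rewrite /mulI val_insubd mulF_in ?(valP x) ?(valP y). Qed.
Definition hi (a : Sig) : Mi := insubd oneI (hw [:: a]).
Lemma val_hi a : val (hi a) = hw [:: a].
Proof. by rewrite /hi val_insubd hw_in. Qed.

Lemma mulIA : associative mulI.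
Proof. by move=> x y z; apply: val_inj; rewrite !val_mulI mulFA. Qed.
Lemma mulI1 : left_id oneI mulI.
Proof. by move=> x; apply: val_inj; rewrite val_mulI mulF1. Qed.
Lemma mulIr1 : right_id oneI mulI.
Proof. by move=> x; apply: val_inj; rewrite val_mulI mulFr1. Qed.

Lemma mpow_hw (x : Mi) u : val x = hw u -> forall n, val (mpow mulI oneI x n) = hw (upow u n).
Proof.
move=> E; elim=> [|n IH]; first by rewrite /= /upow /= hw_nil.
have -> : mpow mulI oneI x n.+1 = mulI x (mpow mulI oneI x n) by [].
by rewrite val_mulI IH E -hw_cat.
Qed.

Lemma mem_count (X : Xv) (l : seq (Gam + Xv)) : (inr X \in l) = (0 < count (pred1 (inr X)) l).
Proof. by rewrite -has_pred1 has_count. Qed.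

Hypothesis Tap : aperiodic T.
Variable x0 : Xv.

Lemma mon_ok_I : mon_ok mulI oneI.
Proof.
case: Tap => m [m1 Hm].
split; [exact: mulIA|exact: mulI1|exact: mulIr1|exists m => x].
have [u Eu] : exists u, hw u = val x by apply/ImgP; exact: (valP x).
apply: val_inj; rewrite !(mpow_hw (esym Eu)).
set w1 := upow u m; set w2 := upow u m.+1.
have Hd : forall p, dest T p w2 = dest T p w1.
  move=> p; have := Hm u p x0 (dest T p w1) x0; rewrite /trans_mx eqxx -/w1 -/w2.
  by case: eqP.
congr pair; apply/ffunP => t; rewrite !ffunE //.
case: t => [[p X] Y] /=.
have := Hm u p X (dest T p w1) Y; rewrite /trans_mx eqxx -/w1 -/w2 Hd eqxx => -[E _].
by rewrite !mem_count E.
Qed.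
End SSTmon.

Definition foOr (S : Type) (a b : fo S) : fo S := FNot (FAnd (FNot a) (FNot b)).
Definition foOrL (S : Type) (l : seq (fo S)) : fo S := foldr (@foOr S) (FNot (FEq S 0 0)) l.

Lemma fo_Or (S : Type) s nu (a b : fo S) : fo_sat s nu (foOr a b) <-> fo_sat s nu a \/ fo_sat s nu b.
Proof. simpl; split; [|tauto]. intros H; apply NNPP; tauto. Qed.

Lemma fo_OrL (S : Type) (U : eqType) (l : seq U) (P : pred U) (f : U -> fo S) s nu :
  fo_sat s nu (foOrL [seq f t | t <- l & P t]) <-> exists t, t \in l /\ P t /\ fo_sat s nu (f t).
Proof.
elim: l => [|t l IH].
  split; [by move=> H; exfalso; apply: H; reflexivity| by case=> ? []].
have -> : [seq t <- t :: l | P t] = (if P t then t :: [seq t <- l | P t] else [seq t <- l | P t]) by [].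
case Pt: (P t).
  rewrite map_cons.
  have -> : forall a l', foOrL (a :: l') = foOr a (foOrL l') by [].
  rewrite fo_Or IH; split.
    case=> [H|[u [H1 H2]]]; first by exists t; rewrite inE eqxx.
    by exists u; rewrite inE H1 orbT.
  case=> u; rewrite inE => -[/orP[/eqP->|H1] [H2 H3]]; [by left|right; exists u; tauto].
rewrite IH; split; case=> u [H1 H2]; exists u; first by rewrite inE H1 orbT.
move: H1; rewrite inE => /orP[/eqP Eu|]; last by [].
by move: H2; rewrite Eu Pt => -[].
Qed.

Lemma sat_ExG (A : Type) D (lab : nat -> A) nu v f :
  sat D lab nu (Ex v f) <-> exists n, D n /\ sat D lab (upd nu v n) f.
Proof. by []. Qed.
Lemma sat_AndG (A : Type) D (lab : nat -> A) nu f g :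
  sat D lab nu (And f g) <-> sat D lab nu f /\ sat D lab nu g.
Proof. by []. Qed.

Section Final.
Variables (Sig Gam : finType) (T : sst Sig Gam).
Local Notation Q := (state T).
Local Notation Xv := (var T).
Local Notation MI := (@Mi Sig Gam T).
Local Notation mulI := (@mulI Sig Gam T).
Local Notation oneI := (@oneI Sig Gam T).

Definition Dpos (k : nat) : bool := 0 < k.
Definition labpos (s : nat -> Sig) (k : nat) : MI := hi T (s k.-1).

Fixpoint toFO (f : L MI) : fo Sig :=
  match f with
  | Lab a x => foOrL [seq FLetter σ x | σ <- enum Sig & hi T σ == a]
  | Lt x y => FLt Sig x y
  | Eqv x y => FEq Sig x y
  | Not g => FNot (toFO g)
  | And g h => FAnd (toFO g) (toFO h)
  | Ex x g => FEx x (toFO g)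
  end.

Lemma toFO_sat (s : nat -> Sig) f nu : fo_sat s nu (toFO f) <-> sat Dpos (labpos s) nu f.
Proof.
elim: f nu => [a x|x y|x y|g IH|g IHg h IHh|x g IH] nu /=; try tauto.
- rewrite fo_OrL; split.
    by case=> σ [_ [/eqP <- E]]; rewrite /labpos E.
  by move=> <-; exists (s (nu x).-1); rewrite mem_enum /labpos eqxx.
- by have := IH nu; tauto.
- by have := IHg nu; have := IHh nu; tauto.
- split; case=> n [n1 H]; exists n; split => //; by apply/IH.
Qed.

Lemma factor_S (s : nat -> Sig) i j : i <= j -> factor s i j.+1 = factor s i j ++ [:: s j].
Proof.
move=> ij; rewrite /factor.
have -> : j.+1 - i = (j - i) + 1 by lia.
rewrite iotaD map_cat /=.
by have -> : i + (j - i) = j by lia.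
Qed.

Lemma prod_word (s : nat -> Sig) i j : i <= j -> valI (prodI mulI oneI Dpos (labpos s) i j) = hw T (factor s i j).
Proof.
elim: j => [|j IH] ij.
  have -> : i = 0 by lia.
  by rewrite prodI_nil // /factor /valI /= hw_nil.
case: (leqP i j) => ij'; last first.
  have -> : i = j.+1 by lia.
  by rewrite prodI_nil // /factor subnn /valI /= hw_nil.
move: IH; rewrite /valI => IH.
rewrite (prodI_S (@mulIA _ _ T) (@mulI1 _ _ T) (@mulIr1 _ _ T)) //= val_mulI IH // /labpos val_hi.
by rewrite -hw_cat factor_S.
Qed.

Lemma run_dest (s : nat -> Sig) i j : i <= j -> run T s j = dest T (run T s i) (factor s i j).
Proof.
elim: j => [|j IH] ij.
  by have -> : i = 0 by lia.
case: (leqP i j) => ij'; last first.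
  have -> : i = j.+1 by lia.
  by rewrite /factor subnn.
by rewrite factor_S // dest_cat -IH.
Qed.

Variable F : nat -> nat -> MI -> L MI.
Hypothesis HF : forall x y m (D : nat -> bool) (lab : nat -> MI),
    (forall k, D k -> lab k \in [set: MI]) -> forall nu,
    sat D lab nu (F x y m) <-> prodI mulI oneI D lab (nu x) (nu y) = m.
Variables (X Y : Xv).

Definition Pref (q : Q) : L MI :=
  Ex 2 (And (Not (Ex 3 (Lt 3 2)))
    (OrL [seq And (Lab t.1 2) (F 2 0 t.2) | t <- enum {: MI * MI} & ((valI (mulI t.1 t.2)).1 (init T) == q)])).
Definition Phi : L MI :=
  OrL [seq And (Pref q) (OrL [seq F 0 1 b | b <- enum MI & (valI b).2 (q, X, Y)]) | q <- enum Q & true].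

Section S.
Variable s : nat -> Sig.
Local Notation prodP := (prodI mulI oneI Dpos (labpos s)).
Lemma HF' x y m nu : sat Dpos (labpos s) nu (F x y m) <-> prodP (nu x) (nu y) = m.
Proof. by apply: HF => k _; rewrite inE. Qed.

Lemma Pref_sat nu q : 0 < nu 0 -> (sat Dpos (labpos s) nu (Pref q) <-> (valI (prodP 0 (nu 0))).1 (init T) = q).
Proof.
move=> n0.
have split0 : prodP 0 (nu 0) = mulI (labpos s 1) (prodP 1 (nu 0)).
  rewrite (prodI_split (@mulIA _ _ T) (@mulI1 _ _ T) (@mulIr1 _ _ T) _ _ (k := 1)) //.
  rewrite (prodI_S (@mulIA _ _ T) (@mulI1 _ _ T) (@mulIr1 _ _ T)) // prodI_nil //.
  by rewrite /Dpos /= mulI1.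
rewrite /Pref sat_ExG; split.
  case=> n [n1]; rewrite sat_AndG => -[NE H].
  have En : n = 1.
    move: n1; rewrite /Dpos => n1.
    case: (ltngtP n 1) => // lt; [lia|].
    by exfalso; apply: NE; exists 1; split => //; rewrite /upd /=.
  move: H; rewrite sat_OrL_fin => -[t [/eqP Et]]; rewrite sat_AndG HF' => -[Hl Hr].
  move: Hl Hr; rewrite /upd /= En => Hl Hr.
  by rewrite split0 Hl Hr.
move=> Eq; exists 1; split => //; rewrite sat_AndG; split.
  by case=> w [w1]; rewrite /upd /=; move: w1; rewrite /Dpos; lia.
rewrite sat_OrL_fin; exists (labpos s 1, prodP 1 (nu 0)); split.
  by rewrite /= -split0 Eq.
rewrite sat_AndG HF'; split => //; by rewrite /upd /=.
Qed.

Lemma Phi_sat nu : 0 < nu 0 -> (sat Dpos (labpos s) nu Phi <->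
   (valI (prodP (nu 0) (nu 1))).2 ((valI (prodP 0 (nu 0))).1 (init T), X, Y)).
Proof.
move=> n0; rewrite /Phi sat_OrL_fin; split.
  case=> q [_]; rewrite sat_AndG => -[/(Pref_sat q n0) Eq]; rewrite sat_OrL_fin => -[b [Hb]].
  by rewrite HF' Eq => ->.
move=> H; exists ((valI (prodP 0 (nu 0))).1 (init T)); split => //; rewrite sat_AndG; split.
  by apply/(Pref_sat _ n0).
rewrite sat_OrL_fin; exists (prodP (nu 0) (nu 1)); split => //.
by rewrite HF'.
Qed.
End S.
End Final.

Fixpoint fbnd (S : Type) (f : fo S) : nat :=
  match f with
  | FLetter _ x => x.+1
  | FLt x y | FEq x y => maxn x.+1 y.+1
  | FNot g => fbnd g
  | FAnd g h => maxn (fbnd g) (fbnd h)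
  | FEx x g => maxn x.+1 (fbnd g)
  end.

Lemma fo_free_bnd (S : Type) (f : fo S) (P : nat -> bool) :
  (forall u, u < fbnd f -> P u) -> fo_free_in P f.
Proof.
elim: f P => [a x|x y|x y|g IH|g IHg h IHh|x g IH] P H /=.
- by apply: H.
- by rewrite !H // leq_max ltnSn ?orbT.
- by rewrite !H // leq_max ltnSn ?orbT.
- by apply: IH.
- apply/andP; split; [apply: IHg => u uh; apply: H; by rewrite /= leq_max uh|].
  apply: IHh => u uh; apply: H; by rewrite /= leq_max uh orbT.
apply: IH => u ug; rewrite H ?orbT //= leq_max ug orbT //.
Qed.

Lemma fo_free_mono (S : Type) (f : fo S) (P R : nat -> bool) :
  (forall u, P u -> R u) -> fo_free_in P f -> fo_free_in R f.
Proof.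
elim: f P R => [a x|x y|x y|g IH|g IHg h IHh|x g IH] P R H /=.
- by apply: H.
- by move=> /andP[/H -> /H ->].
- by move=> /andP[/H -> /H ->].
- by apply: IH.
- by move=> /andP[/(IHg _ _ H) -> /(IHh _ _ H) ->].
apply: IH => u /orP[->//|/H ->]; by rewrite orbT.
Qed.

Definition wrap (S : Type) (v : nat) (f : fo S) : fo S := FEx v (FAnd (FEq S v 1) f).
Definition closeF (S : Type) (vs : seq nat) (f : fo S) : fo S := foldr (@wrap S) f vs.

Lemma closeF_free (S : Type) vs (f : fo S) (P : nat -> bool) :
  P 1 -> fo_free_in (fun u => (u \in vs) || P u) f -> fo_free_in P (closeF vs f).
Proof.
elim: vs P => [|v vs IH] P P1 Hf /=.
  by apply: fo_free_mono Hf => u.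
rewrite eqxx /= P1 orbT /=.
apply: IH; first by rewrite P1 orbT.
apply: fo_free_mono Hf => u; rewrite inE.
by case: (u == v); case: (u \in vs).
Qed.

Lemma closeF_sat (S : Type) (s : nat -> S) vs (f : fo S) (R : nat -> nat -> Prop) :
  all (fun v => 1 < v) vs ->
  (forall nu, 0 < nu 0 -> 0 < nu 1 -> (fo_sat s nu f <-> R (nu 0) (nu 1))) ->
  forall nu, 0 < nu 0 -> 0 < nu 1 -> (fo_sat s nu (closeF vs f) <-> R (nu 0) (nu 1)).
Proof.
move=> Hvs Hf; elim: vs Hvs => [|v vs IH] //= /andP[v1 Hvs] nu n0 n1.
have v0 : (0 == v) = false by apply/eqP; lia.
have v1' : (1 == v) = false by apply/eqP; lia.
split.
  case=> n [_ [/= E H]]; move: E; rewrite eqxx v1' => E.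
  have := IH Hvs (fun u => if u == v then n else nu u); rewrite /= v0 v1'.
  by move=> /(_ n0 n1) <-.
move=> HR; exists (nu 1); split => //; split; first by rewrite /= eqxx v1'.
have := IH Hvs (fun u => if u == v then nu 1 else nu u); rewrite /= v0 v1'.
by move=> /(_ n0 n1) ->.
Qed.

Lemma flows_mem (Sig Gam : finType) (T : sst Sig Gam) p (X Y : var T) u :
  one_bounded T ->
  (flows T p X u (dest T p u) Y 1 <-> inr X \in sigma_run T p u Y).
Proof.
move=> Tob.
have Hb : count (pred1 (inr X)) (sigma_run T p u Y) <= 1.
  have E : trans_mx T u p X (dest T p u) Y = Some (count (pred1 (inr X)) (sigma_run T p u Y),
     [ffun Fi => if outF T Fi is Some _ then xcomp (visited T p u) Fi else XZero T]).
    by rewrite /trans_mx eqxx.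
  exact: Tob E.
rewrite mem_count /flows; split; first by case=> _ ->.
by move=> H; split => //; lia.
Qed.

Theorem mainTheorem6 (Sig Gam : finType) (T : sst Sig Gam) :
  aperiodic T -> one_bounded T ->
  forall X Y : var T,
  exists phi : fo Sig,
    fo_free_in (fun v => v < 2) phi /\
    forall s : nat -> Sig, in_dom T s ->
    forall i j : nat, 1 <= i -> i <= j ->
      (fo_sat s (val2 i j) phi <->
       flows T (run T s i) X (factor s i j) (run T s j) Y 1).
Proof.
move=> Tap Tob X Y.
have [F HF] := @all_claim #|Mi T| (Mi T) (@mulI _ _ T) (@oneI _ _ T) (leqnn _) (mon_ok_I Tap X) setT.
set phi0 := toFO (Phi F X Y).
exists (closeF (iota 2 (fbnd phi0)) phi0); split.
  apply: closeF_free => //; apply: fo_free_bnd => u ub.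
  rewrite mem_iota; case: (ltnP u 2) => u2; rewrite ?orbT //; apply/orP; left; lia.
move=> s _ i j i1 ij.
pose R := fun a b => (valI (prodI (@mulI _ _ T) (@oneI _ _ T) Dpos (labpos T s) a b)).2
     ((valI (prodI (@mulI _ _ T) (@oneI _ _ T) Dpos (labpos T s) 0 a)).1 (init T), X, Y).
have K : forall nu, 0 < nu 0 -> 0 < nu 1 -> (fo_sat s nu phi0 <-> R (nu 0) (nu 1)).
  move=> nu n0 _; rewrite toFO_sat; apply: Phi_sat => //.
rewrite (closeF_sat (R := R) _ K); try (by rewrite /val2 /=; lia);
  try (by apply/allP => v; rewrite mem_iota => /andP[a _]).
rewrite /R /val2 /= (run_dest T s ij) flows_mem //.
rewrite !prod_word // !ffunE /=.
by rewrite -(run_dest T s (leq0n i)).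
Qed.
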